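(* Let $M>0$. Then: (i) $\beta_M(x)\le0$ for every $x\in S$; (ii) if $\bar x\in S$ is not a stationary point, then $\beta_M(\bar x)<0$ and $d_M(\bar x)\ne0$; (iii) if $\beta_M(\bar x)=0$ for some $\bar x\in S$, then $\bar x$ is a stationary point.
   Context: Setting: $S\subseteq\mathbb{R}^n$ is a nonempty closed convex set with nonempty interior, $K\subset\mathbb{R}^p$ is a pointed closed convex cone, $f=(f_1,\dots,f_p)^\top:S\to\mathbb{R}^p$ is twice continuously differentiable, with Jacobian $Jf(x)$ ($p\times n$). With $K^*=\{u:\langle u,\xi\rangle\ge0\ \forall\xi\in K\}$, there is a finite set $C\subset K^*$ of unit vectors with $\mathrm{cone}(\mathrm{conv}(C))=K^*$ (so $\mathrm{int}(K)=\{u:\langle u,\xi\rangle>0\ \forall\xi\in C\}$). A point $\bar x\in S$ is stationary (Pareto critical) if $R(Jf(\bar x))\cap(-\mathrm{int}(K))=\emptyset$, where $R(Jf(\bar x))$ is the range of $Jf(\bar x)$. Notation: $\langle Jf(x)d,\xi\rangle=\sum_i\xi_i\nabla f_i(x)^\top d$, $\langle d^\top\nabla^2f(x)d,\xi\rangle=\sum_i\xi_i d^\top\nabla^2 f_i(x)d$. For $x\in S$: $q_M(x,d)=\max_{\xi\in C}\{\langle Jf(x)d,\xi\rangle+\tfrac12\langle d^\top\nabla^2f(x)d,\xi\rangle\}+\tfrac M6\|d\|^3$, $d_M(x)$ a (fixed) global minimizer of $q_M(x,\cdot)$ over $\mathbb{R}^n$, and $\beta_M(x)=\min_{d\in\mathbb{R}^n}q_M(x,d)$.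 *)

(* Defs.v *)
From mathcomp Require Import all_boot all_order all_algebra.
From mathcomp Require Import all_classical all_reals all_analysis.
Import Order.TTheory GRing.Theory Num.Theory.
Import numFieldNormedType.Exports.

Set Implicit Arguments.
Unset Strict Implicit.
Unset Printing Implicit Defensive.

Local Open Scope ring_scope.
Local Open Scope classical_set_scope.

Definition dotv (R : realType) (k : nat) (u v : 'rV[R]_k) : R :=
  \sum_(i < k) u ord0 i * v ord0 i.

Definition enorm (R : realType) (k : nat) (v : 'rV[R]_k) : R :=
  Num.sqrt (dotv v v).

Definition is_cone (R : realType) (k : nat) (K : set 'rV[R]_k) : Prop :=
  K 0 /\ forall x (t : R), K x -> 0 <= t -> K (t *: x).

Definition pointed (R : realType) (k : nat) (K : set 'rV[R]_k) : Prop :=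
  forall x, K x -> K (- x) -> x = 0.

Definition dual_cone (R : realType) (k : nat) (K : set 'rV[R]_k) : set 'rV[R]_k :=
  [set u | forall xi, K xi -> 0 <= dotv u xi].

Definition conv_seq (R : realType) (k : nat) (C : seq 'rV[R]_k) : set 'rV[R]_k :=
  [set y | exists t : 'I_(size C) -> R,
     [/\ forall i, 0 <= t i, \sum_(i < size C) t i = 1
       & y = \sum_(i < size C) t i *: C`_i]].

Definition cone_of (R : realType) (k : nat) (A : set 'rV[R]_k) : set 'rV[R]_k :=
  [set y | exists (lam : R) a, [/\ 0 <= lam, A a & y = lam *: a]].

Definition C2_on (R : realType) (n p : nat) (S : set 'rV[R]_n)
    (f : 'rV[R]_n -> 'rV[R]_p) : Prop :=
  exists U : set 'rV[R]_n, [/\ open U, S `<=` U,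
    forall x, U x -> differentiable f x /\
      forall v : 'rV[R]_n, differentiable (fun y => 'd f y v) x
  & forall (v w : 'rV[R]_n) x, U x ->
      {for x, continuous (fun y => 'd (fun z => 'd f z v) y w)}].

Definition Jf (R : realType) (n p : nat) (f : 'rV[R]_n -> 'rV[R]_p)
    (x d : 'rV[R]_n) : 'rV[R]_p := 'd f x d.

(* the vector (d^T ∇^2 f_i(x) d)_{i=1..p} *)
Definition hess_quad (R : realType) (n p : nat) (f : 'rV[R]_n -> 'rV[R]_p)
    (x d : 'rV[R]_n) : 'rV[R]_p := 'd (fun y => 'd f y d) x d.

(* maximum of a nonempty finite sequence of reals (0 for the empty one,
   a case excluded by the standing hypotheses) *)
Definition seqmax (R : realType) (s : seq R) : R :=
  if s is a :: s' then foldr Num.max a s' else 0.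

Definition qM (R : realType) (n p : nat) (M : R) (f : 'rV[R]_n -> 'rV[R]_p)
    (C : seq 'rV[R]_p) (x d : 'rV[R]_n) : R :=
  seqmax [seq dotv (Jf f x d) xi + 2^-1 * dotv (hess_quad f x d) xi | xi <- C]
  + M / 6 * enorm d ^+ 3.

Definition betaM (R : realType) (n p : nat) (M : R) (f : 'rV[R]_n -> 'rV[R]_p)
    (C : seq 'rV[R]_p) (dM : 'rV[R]_n -> 'rV[R]_n) (x : 'rV[R]_n) : R :=
  qM M f C x (dM x).

Definition stationary (R : realType) (n p : nat) (f : 'rV[R]_n -> 'rV[R]_p)
    (K : set 'rV[R]_p) (x : 'rV[R]_n) : Prop :=
  ~ exists d : 'rV[R]_n, (interior K) (- Jf f x d).

(* Main.v *)
Require Import Defs.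
From mathcomp Require Import all_boot all_order all_algebra.
From mathcomp Require Import all_classical all_reals all_analysis.
From mathcomp Require Import ring lra.
Import Order.TTheory GRing.Theory Num.Theory.
Import numFieldNormedType.Exports.
Local Open Scope ring_scope.
Local Open Scope classical_set_scope.

Lemma seqmax_ge (R : realType) (s : seq R) y : y \in s -> y <= seqmax s.
Proof.
case: s => [//|a s] /=.
elim: s y => [|b s IH] y /=.
  by rewrite mem_seq1 => /eqP ->.
rewrite !inE le_max => /or3P [/eqP->|/eqP->|H].
- apply/orP; right; apply: IH; exact: mem_head.
- by rewrite lexx.
- apply/orP; right; apply: IH; by rewrite inE H orbT.
Qed.

Lemma seqmax_lt (R : realType) (s : seq R) m :
  s != [::] -> (forall y, y \in s -> y < m) -> seqmax s < m.
Proof.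
case: s => [//|a s] _ /= H.
elim: s H => [|b s IH] H /=; first by apply: H; exact: mem_head.
rewrite gt_max; apply/andP; split.
  by apply: H; rewrite !inE eqxx orbT.
apply: IH => y; rewrite !inE => /orP[/eqP->|Hy].
  by apply: H; rewrite inE eqxx.
by apply: H; rewrite !inE Hy !orbT.
Qed.

Lemma seqmax0 (R : realType) (s : seq R) :
  (forall y, y \in s -> y = 0) -> seqmax s = 0.
Proof.
case: s => [//|a s] /= H.
elim: s H => [|b s IH] H /=; first by apply: H; exact: mem_head.
rewrite IH; last by move=> y Hy; apply: H; move: Hy; rewrite !inE => /orP[->|->]; rewrite ?orbT.
by rewrite (H b) ?maxxx // !inE eqxx orbT.
Qed.

Lemma dotv0l (R : realType) k (v : 'rV[R]_k) : dotv 0 v = 0.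
Proof. by rewrite /dotv big1 // => i _; rewrite mxE mul0r. Qed.

Lemma dotvZl (R : realType) k (t : R) (u v : 'rV[R]_k) :
  dotv (t *: u) v = t * dotv u v.
Proof. by rewrite /dotv mulr_sumr; apply: eq_bigr => i _; rewrite mxE mulrA. Qed.

Lemma dotvDr (R : realType) k (u v w : 'rV[R]_k) :
  dotv u (v + w) = dotv u v + dotv u w.
Proof. by rewrite /dotv -big_split; apply: eq_bigr => i _; rewrite mxE mulrDr. Qed.

Lemma dotvNr (R : realType) k (u v : 'rV[R]_k) :
  dotv u (- v) = - dotv u v.
Proof. by rewrite /dotv -sumrN; apply: eq_bigr => i _; rewrite mxE mulrN. Qed.

Lemma dotvZr (R : realType) k (t : R) (u v : 'rV[R]_k) :
  dotv u (t *: v) = t * dotv u v.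
Proof. by rewrite /dotv mulr_sumr; apply: eq_bigr => i _; rewrite mxE mulrCA. Qed.

Lemma dotvC (R : realType) k (u v : 'rV[R]_k) : dotv u v = dotv v u.
Proof. by rewrite /dotv; apply: eq_bigr => i _; rewrite mulrC. Qed.

Lemma dotv_ge0 (R : realType) k (u : 'rV[R]_k) : 0 <= dotv u u.
Proof. by rewrite /dotv sumr_ge0 // => i _; rewrite -expr2 sqr_ge0. Qed.

Lemma enorm0 (R : realType) k : enorm (0 : 'rV[R]_k) = 0.
Proof. by rewrite /enorm dotv0l sqrtr0. Qed.

Lemma enormZ (R : realType) k (t : R) (u : 'rV[R]_k) :
  enorm (t *: u) = `|t| * enorm u.
Proof.
rewrite /enorm dotvZl dotvZr mulrA -expr2 sqrtrM ?sqr_ge0 //.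
by rewrite sqrtr_sqr.
Qed.


Lemma qM_zero (R : realType) (n p : nat) (M : R) (f : 'rV[R]_n -> 'rV[R]_p)
    (C : seq 'rV[R]_p) x : qM M f C x 0 = 0.
Proof.
rewrite /qM enorm0 expr0n mulr0 addr0.
apply: seqmax0 => y /mapP [xi _ ->].
have -> : Jf f x 0 = 0 by rewrite /Jf linear0.
have -> : hess_quad f x 0 = 0 by rewrite /hess_quad linear0.
by rewrite !dotv0l mulr0 addr0.
Qed.

Lemma EJ (R : realType) (n p : nat) (f : 'rV[R]_n -> 'rV[R]_p) x d t :
 Jf f x (t *: d) = t *: Jf f x d.
Proof. rewrite /Jf. exact: linearZ. Qed.

Lemma EH (R : realType) (n p : nat) (f : 'rV[R]_n -> 'rV[R]_p) x d t :
  differentiable (fun y => 'd f y d) x ->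
  hess_quad f x (t *: d) = (t ^+ 2) *: hess_quad f x d.
Proof.
move=> dif.
have D := diffZ t dif.
have D' := congr1 (fun F => F (t *: d)) D.
have E : (fun y => 'd f y (t *: d)) = t *: (fun y => 'd f y d).
  by apply/funext => y; exact: linearZ.
have L : 'd (fun y => 'd f y d) x (t *: d) = t *: 'd (fun y => 'd f y d) x d.
  exact: linearZ.
rewrite /hess_quad E.
apply: (etrans D').
(apply: (etrans (congr1 (fun v => t *: v) L)); rewrite scalerA -expr2).
reflexivity.
Qed.

Lemma arith (R : realFieldType) (t a b al B c : R) :
  0 < t -> t <= 1 -> 0 <= c -> 0 <= B -> t * (B + c) < al ->
  a <= - al -> 2^-1 * b <= B ->
  t * a + 2^-1 * (t ^+ 2 * b) < - (c * t ^+ 3).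
Proof.
move=> t0 t1 c0 B0 tBc ha hb.
have h1 : t * a <= t * (- al) by rewrite ler_wpM2l // ltW.
have h2 : 2^-1 * (t ^+ 2 * b) <= t ^+ 2 * B.
  by rewrite mulrCA ler_wpM2l // exprn_ge0 // ltW.
have h3 : c * t ^+ 3 <= c * t ^+ 2.
  by rewrite ler_wpM2l // exprSr ler_piMr // exprn_ge0 // ltW.
have h4 : t * (t * (B + c)) < t * al by rewrite ltr_pM2l.
rewrite !expr2 exprS expr2 in h2 h3 *.
nra.
Qed.

Lemma entry_eq (R : realType) k (t : R) (J H xi : 'rV[R]_k) :
  dotv (t *: J) xi + 2^-1 * dotv (t ^+ 2 *: H) xi =
  t * dotv J xi + 2^-1 * (t ^+ 2 * dotv H xi).
Proof. by rewrite !dotvZl. Qed.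

Lemma qM_neg (R : realType) (n p : nat) (M : R) (f : 'rV[R]_n -> 'rV[R]_p)
    (C : seq 'rV[R]_p) x d : 0 <= M -> C != [::] ->
  differentiable (fun y => 'd f y d) x ->
  (forall xi, xi \in C -> dotv (Jf f x d) xi < 0) ->
  exists d', qM M f C x d' < 0.
Proof.
move=> M0 Cn0 dif Ha.
have EJ := @EJ R n p f x d.
have EH t := @EH R n p f x d t dif.
set a := fun xi => dotv (Jf f x d) xi.
set b := fun xi => dotv (hess_quad f x d) xi.
set ma := seqmax [seq a xi | xi <- C].
have ma0 : ma < 0.
  apply: seqmax_lt; first by case: (C) Cn0.
  by move=> y /mapP [xi Hxi ->]; apply: Ha.
set al := - ma.
have al0 : 0 < al by rewrite /al oppr_gt0.
set B := Num.max 0 (seqmax [seq 2^-1 * b xi | xi <- C]).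
have B0 : 0 <= B by rewrite /B le_max lexx.
set c := M / 6 * enorm d ^+ 3.
have c0 : 0 <= c.
  by rewrite /c mulr_ge0 ?divr_ge0 ?exprn_ge0 ?sqrtr_ge0 // ler0n.
set t := al / (al + B + c).
have den0 : 0 < al + B + c by rewrite -addrA ltr_wpDr // addr_ge0.
have t0 : 0 < t by rewrite /t divr_gt0.
have t1 : t <= 1 by rewrite /t ler_pdivrMr // mul1r -addrA lerDl addr_ge0.
have tBc : t * (B + c) < al.
  rewrite /t mulrAC ltr_pdivrMr // ltr_pM2l //; lra.
exists (t *: d).
rewrite /qM EJ enormZ (gtr0_norm t0).
have -> : M / 6 * (t * enorm d) ^+ 3 = c * t ^+ 3 by rewrite /c exprMn; ring.
rewrite -ltrBrDr sub0r.
apply: seqmax_lt; first by case: (C) Cn0.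
move=> y /mapP [xi Hxi ->]; rewrite EH entry_eq.
have ha0 : a xi <= ma := @seqmax_ge _ _ _ (map_f a Hxi).
have ha : a xi <= - al by rewrite /al opprK.
have hb0 := @seqmax_ge _ _ _ (map_f (fun xi => 2^-1 * b xi) Hxi).
have hb : 2^-1 * b xi <= B by rewrite /B le_max; apply/orP; right; exact: hb0.
exact: (@arith _ _ _ _ _ _ _ t0 t1 c0 B0 tBc ha hb).
Qed.

Lemma int_pos (R : realType) p (K : set 'rV[R]_p) (c u : 'rV[R]_p) :
  interior K u -> dual_cone K c -> enorm c = 1 -> 0 < dotv c u.
Proof.
move=> /nbhs_ballP [e /= e0 Hb] Hc Hn.
have cc : dotv c c = 1.
  by rewrite -(@sqr_sqrtr _ (dotv c c)) ?dotv_ge0 // -/(enorm c) Hn expr1n.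
set eps := e / (`|c| + 1).
have n1 : 0 < `|c| + 1 by rewrite ltr_pwDr.
have eps0 : 0 < eps by rewrite /eps divr_gt0.
have Kv : K (u - eps *: c).
  apply: Hb; rewrite -ball_normE /ball_ /=.
  rewrite opprD addrA subrr add0r opprK normrZ (gtr0_norm eps0) /eps.
  rewrite mulrAC ltr_pdivrMr // ltr_pM2l //; lra.
have := Hc _ Kv.
rewrite dotvDr dotvNr dotvZr cc mulr1 subr_ge0 => H.
exact: lt_le_trans eps0 H.
Qed.

Lemma Jneg (R : realType) (n p : nat) (K : set 'rV[R]_p) (C : seq 'rV[R]_p)
    (f : 'rV[R]_n -> 'rV[R]_p) x d :
  (forall c, c \in C -> enorm c = 1) ->
  (forall c, c \in C -> dual_cone K c) ->
  interior K (- Jf f x d) ->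
  forall xi, xi \in C -> dotv (Jf f x d) xi < 0.
Proof.
move=> Hn Hd Hi xi Hxi.
have := @int_pos _ _ _ _ _ Hi (Hd _ Hxi) (Hn _ Hxi).
by rewrite dotvNr oppr_gt0 dotvC.
Qed.

Theorem theorem3p1 (R : realType) (n p : nat)
    (S : set 'rV[R]_n) (K : set 'rV[R]_p) (C : seq 'rV[R]_p)
    (f : 'rV[R]_n -> 'rV[R]_p) (M : R) (dM : 'rV[R]_n -> 'rV[R]_n) :
  (* S: nonempty closed convex set with nonempty interior *)
  closed S -> convex_set S -> (exists x, (interior S) x) ->
  (* K: pointed closed convex cone *)
  is_cone K -> convex_set K -> closed K -> pointed K ->
  (* C: finite set of unit vectors of K^* with cone(conv(C)) = K^* *)
  (forall c, c \in C -> enorm c = 1) ->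
  (forall c, c \in C -> dual_cone K c) ->
  cone_of (conv_seq C) = dual_cone K ->
  (* f twice continuously differentiable on S *)
  C2_on S f ->
  0 < M ->
  (* d_M(x) is a global minimizer of q_M(x, .) over R^n *)
  (forall x, S x -> forall d, qM M f C x (dM x) <= qM M f C x d) ->
  [/\ (forall x, S x -> betaM M f C dM x <= 0),
      (forall xb, S xb -> ~ stationary f K xb ->
         betaM M f C dM xb < 0 /\ dM xb != 0)
    & (forall xb, S xb -> betaM M f C dM xb = 0 -> stationary f K xb)].
Proof.
move=> _ _ _ _ _ _ _ Hn Hd Hcone HC2 M0 Hmin.
have Cn0 : C != [::].
  have : dual_cone K 0 by move=> xi _; rewrite dotv0l.
  rewrite -Hcone => -[lam [a [_ [t [_ Ht _]] _]]].
  case: C Hn Hd Hcone HC2 Hmin t Ht => // _ _ _ _ _ t.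
  by rewrite big_ord0 => /eqP; rewrite eq_sym oner_eq0.
have i1 : forall x, S x -> betaM M f C dM x <= 0.
  move=> x Sx; rewrite /betaM.
  by have := Hmin x Sx 0; rewrite qM_zero.
have i2 : forall xb, S xb -> ~ stationary f K xb ->
         betaM M f C dM xb < 0 /\ dM xb != 0.
  move=> xb Sxb Hns.
  have [d Hdi] : exists d, interior K (- Jf f xb d).
    by apply: contrapT.
  have dif : differentiable (fun y => 'd f y d) xb.
    case: HC2 => U [_ SU H _].
    by case: (H xb (SU xb Sxb)) => _ Hv; exact: Hv.
  have Hneg := @Jneg _ _ _ K C f xb d Hn Hd Hdi.
  have [d' Hd'] := @qM_neg _ _ _ M f C xb d (ltW M0) Cn0 dif Hneg.
  have hb : betaM M f C dM xb < 0.
    by rewrite /betaM; exact: le_lt_trans (Hmin xb Sxb d') Hd'.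
  split => //; apply/eqP => E.
  by move: hb; rewrite /betaM E qM_zero ltxx.
split => // xb Sxb H0.
apply: contrapT => Hns.
have [hb _] := i2 xb Sxb Hns.
by move: hb; rewrite H0 ltxx.
Qed.
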